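(* Let $F:\mathbb{R}\to[0,1]$ be a distribution function, let $0<\lambda\le1$ and $\alpha\in(0,1)$, and put $\xi=F^{\wedge}(\alpha)$, $\eta=F^{\vee}(\alpha)$ and $A^{+}_{\lambda,\alpha}=\{x\in\mathbb{R}:x>\xi,\ F_\lambda(x)\le\alpha\}$. (i) If $\xi<\eta$, then $F(\xi)=\alpha=F(\eta-)$, $\alpha\notin\bigcup_{x\in J_F}\big(F(x-),F(x)\big)$, the set $\{x\in\mathbb{R}:x>\xi,\ F(x)=\alpha\}$ is non-empty, the restriction $F|_{A^{+}_{\lambda,\alpha}}$ is continuous, and \[A^{+}_{\lambda,\alpha}=\{x\in\mathbb{R}:x>\xi,\ F(x)=\alpha\}=\begin{cases}(\xi,\eta)&\text{if }F(\eta)>\alpha,\\(\xi,\eta]&\text{if }F(\eta)=\alpha.\end{cases}\] (ii) If $\xi=\eta$, then $A^{+}_{\lambda,\alpha}=\emptyset$. (iii) $J_F=\{x\in\mathbb{R}:F^{\wedge}(u)=x=F^{\vee}(u)\text{ and }\Delta F(F^{\wedge}(u))>0\text{ for some }u\in(0,1)\}=\{x\in\mathbb{R}:F^{\wedge}(u)=x=F^{\vee}(u)\text{ and }\Delta F(F^{\vee}(u))>0\text{ for some }u\in(0,1)\}$. Moreover, the following are equivalent: (a) $0<\Delta F^{\wedge}(\alpha)=\eta-\xi$; (b) $\{x\in\mathbb{R}:x>\xi,\ F(x)=\alpha\}\neq\emptyset$.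
   Context: A distribution function is a non-decreasing, right-continuous $F:\mathbb{R}\to[0,1]$ with limits $0$ at $-\infty$ and $1$ at $+\infty$. $F(x-)=\lim_{z\uparrow x}F(z)$, $\Delta F(x)=F(x)-F(x-)$, $J_F=\{x:\Delta F(x)>0\}$, $F_\lambda(x)=F(x-)+\lambda\Delta F(x)$. For $\alpha\in(0,1)$: $F^{\wedge}(\alpha)=\inf\{x:F(x)\ge\alpha\}$ (left quantile, a left-continuous non-decreasing function on $(0,1)$) and $F^{\vee}(\alpha)=\inf\{x:F(x)>\alpha\}=\sup\{x:F(x)\le\alpha\}=F^{\wedge}(\alpha+)$ (right quantile). The jump of $F^{\wedge}$ at $\alpha$ is $\Delta F^{\wedge}(\alpha)=F^{\wedge}(\alpha+)-F^{\wedge}(\alpha)=F^{\vee}(\alpha)-F^{\wedge}(\alpha)$. *)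

(* Defs.v *)
From HB Require Import structures.
From mathcomp Require Import all_boot all_order all_algebra.
From mathcomp Require Import all_classical all_reals all_analysis.
Set Implicit Arguments. Unset Strict Implicit. Unset Printing Implicit Defensive.
Import Order.TTheory GRing.Theory Num.Theory.
Import numFieldNormedType.Exports.
Local Open Scope classical_set_scope.
Local Open Scope ring_scope.

Definition distribution_function (R : realType) (F : R -> R) : Prop :=
  [/\ (forall x y : R, x <= y -> F x <= F y),
      (forall x : R, 0 <= F x <= 1),
      (forall x : R, F z @[z --> x^'+] --> F x),
      F x @[x --> -oo] --> (0:R) &
      F x @[x --> +oo] --> (1:R)].

Definition Fm (R : realType) (F : R -> R) (x : R) : R := lim (F z @[z --> x^'-]).

Definition jumpF (R : realType) (F : R -> R) (x : R) : R := F x - Fm F x.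

Definition JF (R : realType) (F : R -> R) : set R := [set x | 0 < jumpF F x].

Definition Flam (R : realType) (F : R -> R) (lam x : R) : R :=
  Fm F x + lam * jumpF F x.

Definition qleft (R : realType) (F : R -> R) (a : R) : R := inf [set x | a <= F x].

Definition qright (R : realType) (F : R -> R) (a : R) : R := inf [set x | a < F x].

Definition qjump (R : realType) (F : R -> R) (a : R) : R :=
  lim (qleft F u @[u --> a^'+]) - qleft F a.

Definition Aplus (R : realType) (F : R -> R) (lam a : R) : set R :=
  [set x | qleft F a < x /\ Flam F lam x <= a].

(* Main.v *)
Require Import Defs.
From HB Require Import structures.
From mathcomp Require Import all_boot all_order all_algebra.
From mathcomp Require Import all_classical all_reals all_analysis.
From mathcomp Require Import lra.
Import Order.TTheory GRing.Theory Num.Theory.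
Import numFieldNormedType.Exports.
Local Open Scope classical_set_scope.
Local Open Scope ring_scope.

Lemma df_mono {R : realType} {F : R -> R} {x y : R} : distribution_function F ->
  x <= y -> F x <= F y.
Proof. by case=> m _ _ _ _; exact: m. Qed.

Lemma df_01 {R : realType} {F : R -> R} : distribution_function F ->
  forall x, 0 <= F x <= 1.
Proof. by case. Qed.

Lemma Fm_cvg {R : realType} {F : R -> R} {x : R} : distribution_function F ->
  cvg (F z @[z --> x^'-]).
Proof.
move=> dF; apply: nondecreasing_at_left_is_cvgr.
  by near=> y => a b _ _ ab; exact: (df_mono dF).
near=> y; exists (F x) => _ [s sI <-]; apply: df_mono => //.
by move: sI; rewrite /= in_itv /= => /andP[_ /ltW].
Unshelve. all: by end_near. Qed.

Lemma Fm_ge {R : realType} {F : R -> R} {y x : R} : distribution_function F ->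
  y < x -> F y <= Fm F x.
Proof.
move=> dF yx; apply: limr_ge; first exact: Fm_cvg.
near=> z; apply: df_mono => //; near: z; exact: nbhs_left_ge.
Unshelve. all: by end_near. Qed.

Lemma Fm_le {R : realType} {F : R -> R} {x : R} : distribution_function F ->
  Fm F x <= F x.
Proof.
move=> dF; apply: limr_le; first exact: Fm_cvg.
near=> z; apply: df_mono => //; apply: ltW; near: z; exact: nbhs_left_lt.
Unshelve. all: by end_near. Qed.

Lemma Fm_le_c {R : realType} {F : R -> R} {x c : R} : distribution_function F ->
  (forall y, y < x -> F y <= c) -> Fm F x <= c.
Proof.
move=> dF H; apply: limr_le; first exact: Fm_cvg.
near=> z; apply: H; near: z; exact: nbhs_left_lt.
Unshelve. all: by end_near. Qed.

Lemma F_ge_c {R : realType} {F : R -> R} {x c : R} : distribution_function F ->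
  (forall y, x < y -> c <= F y) -> c <= F x.
Proof.
move=> [_ _ rc _ _] H.
have <- : lim (F z @[z --> x^'+]) = F x by apply: cvg_lim => //; exact: rc.
apply: limr_ge; first by apply/cvg_ex; exists (F x); exact: rc.
near=> z; apply: H; near: z; exact: nbhs_right_gt.
Unshelve. all: by end_near. Qed.

Lemma ex_gt {R : realType} {F : R -> R} {a : R} : distribution_function F ->
  a < 1 -> exists x, a < F x.
Proof.
move=> [_ _ _ _ lp] a1.
have /cvgrPdist_lt/(_ (1 - a)) : F x @[x --> +oo] --> (1:R) by [].
rewrite subr_gt0 => /(_ a1) [M [_ HM]].
exists (M + 1); have := HM (M + 1); rewrite ltrDl ltr01 => /(_ isT).
move=> h; have := ler_norm (1 - F (M + 1)); lra.
Qed.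

Lemma ex_lt {R : realType} {F : R -> R} {a : R} : distribution_function F ->
  0 < a -> exists x, F x < a.
Proof.
move=> [_ _ _ ln _] a0.
have /cvgrPdist_lt/(_ a a0) : F x @[x --> -oo] --> (0:R) by [].
move=> [M [_ HM]].
exists (M - 1); have := HM (M - 1); rewrite ltrBlDr ltrDl ltr01 => /(_ isT).
rewrite sub0r normrN => h; have := ler_norm (F (M - 1)); lra.
Qed.

Lemma lbS {R : realType} {F : R -> R} {a : R} : distribution_function F ->
  0 < a -> has_lbound [set x | a <= F x].
Proof.
move=> dF a0; have [x Fx] := ex_lt dF a0; exists x => y /= ay.
rewrite leNgt; apply/negP => yx; have := df_mono dF (ltW yx); lra.
Qed.

Lemma lbT {R : realType} {F : R -> R} {a : R} : distribution_function F ->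
  0 < a -> has_lbound [set x | a < F x].
Proof.
move=> dF a0; have [m hm] := lbS dF a0; exists m => y /= ay; apply: hm => /=.
exact: ltW.
Qed.

Lemma neS {R : realType} {F : R -> R} {a : R} : distribution_function F ->
  a < 1 -> [set x | a <= F x] !=set0.
Proof. by move=> dF a1; have [x ?] := ex_gt dF a1; exists x; apply: ltW. Qed.

Lemma neT {R : realType} {F : R -> R} {a : R} : distribution_function F ->
  a < 1 -> [set x | a < F x] !=set0.
Proof. by move=> dF a1; have [x ?] := ex_gt dF a1; exists x. Qed.


Lemma qleft_lb {R : realType} {F : R -> R} {a y : R} : distribution_function F ->
  0 < a -> a <= F y -> qleft F a <= y.
Proof. by move=> dF a0 ay; apply: ge_inf => //; exact: lbS. Qed.

Lemma qright_lb {R : realType} {F : R -> R} {a y : R} : distribution_function F ->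
  0 < a -> a < F y -> qright F a <= y.
Proof. by move=> dF a0 ay; apply: ge_inf => //; exact: lbT. Qed.

Lemma F_qleft {R : realType} {F : R -> R} {a : R} : distribution_function F ->
  0 < a < 1 -> a <= F (qleft F a).
Proof.
move=> dF /andP[a0 a1]; apply: F_ge_c => // y /(inf_lt (neS dF a1)) [s /= aS sy]; apply: (le_trans aS).
by apply: df_mono => //; exact: ltW.
Qed.

Lemma lt_qleft {R : realType} {F : R -> R} {a x : R} : distribution_function F ->
  0 < a -> x < qleft F a -> F x < a.
Proof.
move=> dF a0 xq; rewrite ltNge; apply/negP => ax.
by have := qleft_lb dF a0 ax; lra.
Qed.

Lemma lt_qright {R : realType} {F : R -> R} {a x : R} : distribution_function F ->
  0 < a -> x < qright F a -> F x <= a.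
Proof.
move=> dF a0 xq; rewrite leNgt; apply/negP => ax.
by have := qright_lb dF a0 ax; lra.
Qed.

Lemma gt_qright {R : realType} {F : R -> R} {a x : R} : distribution_function F ->
  a < 1 -> qright F a < x -> a < F x.
Proof.
move=> dF a1 /(inf_lt (neT dF a1)) [s /= aS sx].
by apply: (lt_le_trans aS); apply: df_mono => //; exact: ltW.
Qed.

Lemma qleft_cvg {R : realType} {F : R -> R} {a : R} : distribution_function F ->
  0 < a < 1 -> qleft F u @[u --> a^'+] --> qright F a.
Proof.
move=> dF /andP[a0 a1]; apply/cvgrPdist_le => e e0.
have h1 : a < F (qright F a + e) by apply: gt_qright => //; lra.
near=> u.
have au : a < u by near: u; exact: nbhs_right_gt.
have u1 : u < 1 by near: u; exact: nbhs_right_lt.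
have uF : u <= F (qright F a + e) by near: u; exact: nbhs_right_le.
have u0 : 0 < u by lra.
have q1 : qleft F u <= qright F a + e by exact: qleft_lb.
have q2 : qright F a <= qleft F u.
  apply: qright_lb => //; apply: (lt_le_trans au); apply: (F_qleft dF).
  by rewrite u0 u1.
rewrite distrC ger0_norm; lra.
Unshelve. all: by end_near. Qed.

Lemma qjumpE {R : realType} {F : R -> R} {a : R} : distribution_function F ->
  0 < a < 1 -> qjump F a = qright F a - qleft F a.
Proof.
by move=> dF a01; rewrite /qjump (cvg_lim _ (qleft_cvg dF a01)).
Qed.

Lemma Fm_ge0 {R : realType} {F : R -> R} {x : R} : distribution_function F ->
  0 <= Fm F x.
Proof.
move=> dF; have h : x - 1 < x by lra.
have := Fm_ge dF h; case/andP: (df_01 dF (x - 1)); lra.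
Qed.

Lemma Aeq {R : realType} {F : R -> R} {lam a : R} : distribution_function F ->
  0 < lam -> 0 < a < 1 ->
  Aplus F lam a = [set x | qleft F a < x /\ F x = a].
Proof.
move=> dF l0 a01; have /andP[a0 a1] := a01.
apply/seteqP; split => x /= [xq h]; split => //.
  have m1 : a <= Fm F x.
    have m : qleft F a < (qleft F a + x) / 2 < x by apply/andP; split; lra.
    case/andP: m => m1 m2; apply: (le_trans (F_qleft dF a01)).
    apply: (le_trans _ (Fm_ge dF m2)); apply: df_mono => //; exact: ltW.
  have m2 := Fm_le dF (x := x).
  move: h; rewrite /Flam /jumpF => h.
  have : 0 <= lam * (F x - Fm F x) by apply: mulr_ge0; lra.
  move=> p; have : lam * (F x - Fm F x) <= 0 by lra.
  rewrite pmulr_rle0 // => q; lra.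
have m1 : a <= Fm F x.
  have m : qleft F a < (qleft F a + x) / 2 < x by apply/andP; split; lra.
  case/andP: m => m1 m2; apply: (le_trans (F_qleft dF a01)).
  apply: (le_trans _ (Fm_ge dF m2)); apply: df_mono => //; exact: ltW.
have m2 := Fm_le dF (x := x).
rewrite /Flam /jumpF.
have -> : F x - Fm F x = 0 by lra.
rewrite mulr0 addr0; lra.
Qed.

Lemma JF_q {R : realType} {F : R -> R} {x : R} : distribution_function F ->
  0 < jumpF F x -> exists2 u, 0 < u < 1 & qleft F u = x /\ qright F u = x.
Proof.
move=> dF; rewrite /jumpF => j.
have m0 := Fm_ge0 dF (x := x).
have /andP[_ f1] := df_01 dF x.
set u := (Fm F x + F x) / 2.
have u0 : 0 < u by rewrite /u; lra.
have u1 : u < 1 by rewrite /u; lra.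
have uF : u < F x by rewrite /u; lra.
have Fu : Fm F x < u by rewrite /u; lra.
exists u; first by rewrite u0 u1.
split; apply/eqP; rewrite eq_le; apply/andP; split.
- exact: (qleft_lb dF u0 (ltW uF)).
- rewrite leNgt; apply/negP => qx.
  have := F_qleft dF (a := u); rewrite u0 u1 => /(_ isT).
  have := Fm_ge dF qx; lra.
- exact: (qright_lb dF u0 uF).
- rewrite leNgt; apply/negP => qx.
  have m : qright F u < (qright F u + x) / 2 < x by apply/andP; split; lra.
  case/andP: m => m1 m2.
  have := gt_qright dF u1 m1; have := Fm_ge dF m2; lra.
Qed.

Theorem mainTheorem3 (R : realType) (F : R -> R) (lam alpha : R) :
  distribution_function F -> 0 < lam <= 1 -> 0 < alpha < 1 ->
  let xi := qleft F alpha in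
  let eta := qright F alpha in
  let A := Aplus F lam alpha in
  (* (i) *)
  (xi < eta ->
     F xi = alpha /\ alpha = Fm F eta /\
     ~ (exists2 x, x \in JF F & Fm F x < alpha < F x) /\
     [set x | xi < x /\ F x = alpha] !=set0 /\
     {within A, continuous F} /\
     A = [set x | xi < x /\ F x = alpha] /\
     (alpha < F eta -> A = `]xi, eta[%classic) /\
     (F eta = alpha -> A = `]xi, eta]%classic)) /\
  (* (ii) *)
  (xi = eta -> A = set0) /\
  (* (iii) *)
  (JF F = [set x | exists2 u, 0 < u < 1 &
             qleft F u = x /\ x = qright F u /\ 0 < jumpF F (qleft F u)] /\
   JF F = [set x | exists2 u, 0 < u < 1 &
             qleft F u = x /\ x = qright F u /\ 0 < jumpF F (qright F u)]) /\
  (* equivalence *)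
  ((0 < qjump F alpha /\ qjump F alpha = eta - xi) <->
     [set x | xi < x /\ F x = alpha] !=set0).
Proof.
move=> dF /andP[l0 l1] a01 xi eta A.
have /andP[a0 a1] := a01.
have AE : A = [set x | xi < x /\ F x = alpha] by exact: Aeq.
have Fxi : alpha <= F xi by exact: F_qleft.
have le_eta : forall x, xi < x -> F x = alpha -> x <= eta.
  move=> x _ Fx; rewrite leNgt; apply/negP => ex.
  by have := gt_qright dF a1 ex; lra.
have Hi : xi < eta ->
     F xi = alpha /\ alpha = Fm F eta /\
     ~ (exists2 x, x \in JF F & Fm F x < alpha < F x) /\
     [set x | xi < x /\ F x = alpha] !=set0 /\
     {within A, continuous F} /\
     A = [set x | xi < x /\ F x = alpha] /\
     (alpha < F eta -> A = `]xi, eta[%classic) /\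
     (F eta = alpha -> A = `]xi, eta]%classic).
  move=> xe.
  have Fxi' : F xi = alpha by have := lt_qright dF a0 xe; lra.
  have mid : forall x, xi < x -> x < eta -> F x = alpha.
    move=> x h1 h2; have := lt_qright dF a0 h2.
    have := df_mono dF (ltW h1); lra.
  have m : xi < (xi + eta) / 2 < eta by apply/andP; split; lra.
  case/andP: m => m1 m2.
  split => //; split.
    apply/eqP; rewrite eq_le; apply/andP; split.
      rewrite -{1}(mid _ m1 m2); exact: Fm_ge.
    apply: Fm_le_c => // y ye; exact: lt_qright.
  split.
    move=> [x _ /andP[h1 h2]].
    have [xx|xx] := leP x xi.
      by have := df_mono dF xx; lra.
    by have := Fm_ge dF xx; lra.
  split; first by exists ((xi + eta) / 2); split => //; exact: mid.
  split.
    apply: (@subspace_eq_continuous _ A _ (fun _ => alpha)).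
      by move=> x; rewrite inE AE /= => -[_ h]; exact/esym.
    exact: cst_continuous.
  split => //; split.
    move=> Fe; rewrite AE; apply/seteqP; split => x /=; rewrite in_itv /=.
      move=> [h1 h2]; rewrite h1 /= lt_neqAle le_eta // andbT.
      by apply/eqP => xe'; move: h2; rewrite xe'; lra.
    by case/andP => h1 h2; split => //; exact: mid.
  move=> Fe; rewrite AE; apply/seteqP; split => x /=; rewrite in_itv /=.
    by move=> [h1 h2]; rewrite h1 /= le_eta.
  case/andP => h1; rewrite le_eqVlt => /orP[/eqP ->|h2]; split => //.
  exact: mid.
split => //; split.
  move=> xe; rewrite AE; apply/seteqP; split => x //= [h1 h2].
  by have := le_eta _ h1 h2; lra.
split.
  split; apply/seteqP; split => x /=.
  - move=> j; have [u u01 [q1 q2]] := JF_q dF j; exists u => //.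
    by rewrite q1 q2.
  - by move=> [u _ [<- [_ j]]].
  - move=> j; have [u u01 [q1 q2]] := JF_q dF j; exists u => //.
    by rewrite q1 q2.
  - by move=> [u _ [_ [-> j]]].
rewrite (qjumpE dF a01) -/xi -/eta; split.
  move=> [h _]; have xe : xi < eta by lra.
  by case: (Hi xe) => _ [_ [_ [? _]]].
move=> [x [h1 h2]]; have := le_eta _ h1 h2; lra.
Qed.
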